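(* Let $N\ge 1$ and $-\infty<a_i\le b_i<\infty$ with $r_i=(b_i-a_i)/2>0$ for all $i$; set $m_i=(a_i+b_i)/2$, $\Theta=\prod_{i=1}^N[a_i,b_i]$, $T(y)=\sum_{i=1}^N y_i$. Let $p$ be a sampling design with inclusion probabilities $\pi_i=\mathbb P_p(i\in S)>0$ for all $i$, and suppose $\mathbb P_p(i\in S,\ j\in S)=\pi_i\pi_j$ for every pair $i\ne j$. Then \[ \inf_{\delta}\sup_{y\in\Theta}R(\delta,p;y)=\sum_{i=1}^N r_i^2\,\frac{1-\pi_i}{\pi_i}, \] where the infimum is over all unbiased estimators, and the infimum is attained by $\widehat T(y_S)=\sum_{i=1}^N m_i+\sum_{i\in S}\frac{y_i-m_i}{\pi_i}$.
   Context: A sampling design is a probability distribution $p$ on the subsets $s\subseteq\{1,\dots,N\}$; $S$ denotes the random sample drawn from $p$, $\mathbb P_p$ and $\mathbb E_p$ denote probability and expectation with respect to $p$. An estimator $\delta$ is a collection of measurable functions $\delta_s:\Theta_s\to\mathbb R$, one for each subset $s$, where $\Theta_s=\prod_{i\in s}[a_i,b_i]$; for $y\in\Theta$ write $y_s=(y_i)_{i\in s}$. The estimator is unbiased if $\mathbb E_p[\delta_S(y_S)]=T(y)$ for all $y\in\Theta$. The risk is $R(\delta,p;y)=\mathbb E_p[(\delta_S(y_S)-T(y))^2]$. *)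

(* Defs.v *)
From HB Require Import structures.
From mathcomp Require Import all_boot all_order all_algebra.
From mathcomp Require Import all_classical all_reals.
From mathcomp Require Import ereal measure lebesgue_measure.
Set Implicit Arguments. Unset Strict Implicit. Unset Printing Implicit Defensive.
Import Order.TTheory GRing.Theory Num.Theory.
Local Open Scope classical_set_scope.
Local Open Scope ring_scope.

Section Sampling.
Variables (R : realType) (N : nat).

Definition is_design (p : {ffun {set 'I_N} -> R}) : Prop :=
  (forall s, 0 <= p s) /\ \sum_(s : {set 'I_N}) p s = 1.

Definition incl_prob (p : {ffun {set 'I_N} -> R}) (i : 'I_N) : R :=
  \sum_(s : {set 'I_N} | i \in s) p s.
Definition incl_prob2 (p : {ffun {set 'I_N} -> R}) (i j : 'I_N) : R :=
  \sum_(s : {set 'I_N} | (i \in s) && (j \in s)) p s.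

Definition Theta (a b : 'I_N -> R) : set ('I_N -> R) :=
  [set y | forall i, a i <= y i <= b i].

Definition total (y : 'I_N -> R) : R := \sum_i y i.

(* An estimator assigns to each sample s a function delta s of y, of which
   only the restriction to Theta and to the coordinates in s matters. *)
Definition estimator := {set 'I_N} -> ('I_N -> R) -> R.

Definition coord_gen (a b : 'I_N -> R) (s : {set 'I_N}) : set (set ('I_N -> R)) :=
  [set A | exists i, i \in s /\ exists B : set R,
      measurable B /\ A = Theta a b `&` (fun y => y i) @^-1` B].

(* delta_s is a measurable function on Theta_s, i.e. a (Borel) measurable
   function of y_s = (y_i)_{i in s}, for y in Theta. *)
Definition is_estimator (a b : 'I_N -> R) (delta : estimator) : Prop :=
  forall s : {set 'I_N},
    (forall y y', Theta a b y -> Theta a b y' ->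
       (forall i, i \in s -> y i = y' i) -> delta s y = delta s y') /\
    (forall B : set R, measurable B ->
       <<s Theta a b, coord_gen a b s >> (Theta a b `&` delta s @^-1` B)).

Definition expect (p : {ffun {set 'I_N} -> R}) (f : {set 'I_N} -> R) : R :=
  \sum_(s : {set 'I_N}) p s * f s.

Definition unbiased (a b : 'I_N -> R) (p : {ffun {set 'I_N} -> R})
  (delta : estimator) : Prop :=
  forall y, Theta a b y -> expect p (fun s => delta s y) = total y.

Definition risk (p : {ffun {set 'I_N} -> R}) (delta : estimator)
  (y : 'I_N -> R) : R :=
  expect p (fun s => (delta s y - total y) ^+ 2).

Definition max_risk (a b : 'I_N -> R) (p : {ffun {set 'I_N} -> R})
  (delta : estimator) : \bar R :=
  ereal_sup [set (risk p delta y)%:E | y in Theta a b].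

Definition minimax_risk (a b : 'I_N -> R) (p : {ffun {set 'I_N} -> R}) : \bar R :=
  ereal_inf [set max_risk a b p delta |
               delta in [set d | is_estimator a b d /\ unbiased a b p d]].

Definition That (a b : 'I_N -> R) (p : {ffun {set 'I_N} -> R}) : estimator :=
  fun s y => \sum_i ((a i + b i) / 2)
             + \sum_(i in s) (y i - (a i + b i) / 2) / incl_prob p i.

End Sampling.

(* Main.v *)
Require Import Defs.
From HB Require Import structures.
From mathcomp Require Import all_boot all_order all_algebra.
From mathcomp Require Import all_classical all_reals all_analysis.
From mathcomp Require Import ring lra.
Import Order.TTheory GRing.Theory Num.Theory.
Local Open Scope classical_set_scope.
Local Open Scope ring_scope.

Definition FT (R : realType) (N : nat) := 'I_N -> R.
HB.instance Definition _ (R : realType) (N : nat) := Choice.on (FT R N).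
HB.instance Definition _ (R : realType) (N : nat) :=
  isPointed.Build (FT R N) (fun _ => 0%R).

Section Meas.
Variables (R : realType) (N : nat) (a b : 'I_N -> R) (s : {set 'I_N}).

Definition Gs : set (set (FT R N)) :=
  [set A | exists i, i \in s /\ exists B : set R,
      measurable B /\ A = (fun y => y i) @^-1` B].

Local Notation TT := (g_sigma_algebraType Gs).

Lemma trace_ok (A : set ('I_N -> R)) : <<s Gs >> A ->
  <<s Theta a b, coord_gen a b s >> (Theta a b `&` A).
Proof.
move=> HA.
pose C := [set A : set ('I_N -> R) | <<s Theta a b, coord_gen a b s >> (Theta a b `&` A)].
have sC : sigma_algebra setT C.
  have sS : sigma_algebra (Theta a b) <<s Theta a b, coord_gen a b s >>.
    exact: smallest_sigma_algebra.
  case: sS => S0 SD SU.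
  split.
  - by rewrite /C /= setI0.
  - move=> B; rewrite /C /= => HB.
    have -> : Theta a b `&` (setT `\` B) = Theta a b `\` (Theta a b `&` B).
      by apply/seteqP; split => y /=; [case=> ? [_ ?]; split => // -[]|case=> ? H; split => //; split => // ?; apply: H].
    exact: SD.
  - move=> F HF; rewrite /C /= setI_bigcupr; exact: SU.
have GC : Gs `<=` C.
  move=> B [i [si [B0 [mB0 ->]]]].
  apply: sub_gen_smallest; exists i; split => //; exists B0; split => //.
exact: (smallest_sub sC GC HA).
Qed.

Lemma coord_meas i : i \in s -> measurable_fun (setT : set TT) (fun y : TT => y i).
Proof.
move=> si _ B mB; rewrite setTI.
apply: sub_gen_smallest; exists i; split => //; exists B; split => //.
Qed.

Lemma lin_meas (c : R) (w m : 'I_N -> R) (B : set R) : measurable B ->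
  <<s Theta a b, coord_gen a b s >>
    (Theta a b `&` (fun y : 'I_N -> R => c + \sum_(i in s) (y i - m i) / w i) @^-1` B).
Proof.
move=> mB.
apply: trace_ok.
have ms : measurable_fun (setT : set TT)
   (fun y : TT => \sum_(i in s) (y i - m i) / w i).
  have -> : (fun y : TT => \sum_(i in s) (y i - m i) / w i) =
     (fun y : TT => \sum_(i <- index_enum 'I_N) (if i \in s then (y i - m i) / w i else 0)).
    by apply: funext => y; rewrite big_mkcond.
  apply: measurable_sum => i.
  case si: (i \in s); last exact: measurable_cst.
  apply: measurable_realfun.measurable_funM; last exact: measurable_cst.
  apply: measurable_realfun.measurable_funD; last exact: measurable_cst.
  exact: coord_meas.
have mf : measurable_fun (setT : set TT)
   (fun y : TT => c + \sum_(i in s) (y i - m i) / w i).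
  exact: (measurable_realfun.measurable_funD (measurable_cst c) ms).
have := mf measurableT B mB; rewrite setTI; exact.
Qed.

End Meas.

Section Expect.
Variables (R : realType) (N : nat) (p : {ffun {set 'I_N} -> R}).
Hypothesis hp1 : \sum_(S : {set 'I_N}) p S = 1.

Lemma expect_ext f g : (forall S, f S = g S) -> expect p f = expect p g.
Proof. by move=> H; apply: eq_bigr => S _; rewrite H. Qed.

Lemma expectD f g : expect p (fun S => f S + g S) = expect p f + expect p g.
Proof. by rewrite /expect -big_split; apply: eq_bigr => S _; rewrite mulrDr. Qed.

Lemma expectZ k f : expect p (fun S => k * f S) = k * expect p f.
Proof. by rewrite /expect mulr_sumr; apply: eq_bigr => S _; rewrite mulrCA. Qed.

Lemma expectN f : expect p (fun S => - f S) = - expect p f.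
Proof. by rewrite /expect -sumrN; apply: eq_bigr => S _; rewrite mulrN. Qed.

Lemma expect_cst k : expect p (fun _ => k) = k.
Proof. by rewrite /expect -mulr_suml hp1 mul1r. Qed.

Lemma expect_sum (I : finType) (F : I -> {set 'I_N} -> R) :
  expect p (fun S => \sum_k F k S) = \sum_k expect p (F k).
Proof.
rewrite /expect.
transitivity (\sum_S \sum_k p S * F k S).
  by apply: eq_bigr => S _; rewrite mulr_sumr.
exact: exchange_big.
Qed.

Lemma expect_if (P : pred {set 'I_N}) k :
  expect p (fun S => if P S then k else 0) = k * \sum_(S | P S) p S.
Proof.
rewrite /expect [in RHS]big_mkcond mulr_sumr; apply: eq_bigr => S _.
by case: (P S); rewrite ?mulr0 // mulrC.
Qed.

End Expect.

Section That.
Variables (R : realType) (N : nat) (a b : 'I_N -> R) (p : {ffun {set 'I_N} -> R}).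
Hypothesis hp1 : \sum_(S : {set 'I_N}) p S = 1.
Hypothesis hpi : forall i, 0 < incl_prob p i.
Hypothesis hind : forall i j, i != j -> incl_prob2 p i j = incl_prob p i * incl_prob p j.

Definition Xf i (S : {set 'I_N}) : R := (if i \in S then (incl_prob p i)^-1 else 0) - 1.

Lemma That_dev y S : That a b p S y - Defs.total y =
  \sum_i (y i - (a i + b i) / 2) * Xf i S.
Proof.
rewrite /That /Defs.total.
under [RHS]eq_bigr do rewrite /Xf mulrBr mulr1.
rewrite sumrB sumrB.
have -> : \sum_i (y i - (a i + b i) / 2) * (if i \in S then (incl_prob p i)^-1 else 0)
   = \sum_i (if i \in S then (y i - (a i + b i) / 2) / incl_prob p i else 0).
  by apply: eq_bigr => i _; case: (i \in S); rewrite ?mulr0.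
rewrite -big_mkcond /=.
ring.
Qed.

Lemma EX i : expect p (Xf i) = 0.
Proof.
rewrite /Xf expectD // expect_if // expect_cst //.
rewrite -/(incl_prob p i) mulVf ?subrr //.
by have := hpi i; rewrite lt0r => /andP[].
Qed.

Lemma EXX i j : expect p (fun S => Xf i S * Xf j S) =
  if i == j then (incl_prob p i)^-1 - 1 else 0.
Proof.
have -> : expect p (fun S => Xf i S * Xf j S) =
  expect p (fun S => (if (i \in S) && (j \in S) then (incl_prob p i)^-1 * (incl_prob p j)^-1 else 0)
     + ((- (if i \in S then (incl_prob p i)^-1 else 0))
     + ((- (if j \in S then (incl_prob p j)^-1 else 0)) + 1))).
  apply: expect_ext => S; rewrite /Xf.
  by case: (i \in S); case: (j \in S) => /=; ring.
rewrite !expectD // !expectN // !expect_if // expect_cst //.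
rewrite -/(incl_prob p i) -/(incl_prob p j) -/(incl_prob2 p i j).
have pi0 : incl_prob p i != 0 by have := hpi i; rewrite lt0r => /andP[].
have pj0 : incl_prob p j != 0 by have := hpi j; rewrite lt0r => /andP[].
case: eqP => [<-|/eqP ij].
  have -> : incl_prob2 p i i = incl_prob p i.
    by apply: eq_bigl => S; rewrite andbb.
  by field.
by rewrite hind //; field; apply/andP; split.
Qed.

Lemma risk_That y : risk p (That a b p) y =
  \sum_i (y i - (a i + b i) / 2) ^+ 2 * ((incl_prob p i)^-1 - 1).
Proof.
rewrite /risk.
transitivity (expect p (fun S => \sum_i \sum_j
   (((y i - (a i + b i) / 2) * (y j - (a j + b j) / 2)) * (Xf i S * Xf j S)))).
  apply: expect_ext => S; rewrite That_dev expr2 mulr_suml.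
  apply: eq_bigr => i _; rewrite mulr_sumr; apply: eq_bigr => j _; ring.
rewrite expect_sum //; apply: eq_bigr => i _; rewrite expect_sum //.
under eq_bigr do rewrite expectZ // EXX.
rewrite (bigD1 i) //= eqxx big1 ?addr0; first ring.
by move=> j /negbTE; rewrite eq_sym => ->; rewrite mulr0.
Qed.

End That.
Arguments Xf {R N} p i S.

Section Vertex.
Variables (R : realType) (N : nat).
Local Notation E := {ffun 'I_N -> bool}.

Definition sg (e : E) i : R := if e i then 1 else -1.
Definition flip i (e : E) : E := [ffun k => if k == i then ~~ e k else e k].
Definition KK : R := \sum_(e : E) 1.

Lemma flipK i : involutive (flip i).
Proof.
move=> e; apply/ffunP => k; rewrite !ffunE; case: eqP => // _; by rewrite negbK.
Qed.

Lemma sum_flip i (F : E -> R) : \sum_e F e = \sum_e F (flip i e).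
Proof. exact: (reindex_inj (can_inj (flipK i))). Qed.

Lemma sg_flip i j e : sg (flip i e) j = if j == i then - sg e j else sg e j.
Proof.
rewrite /sg ffunE; case: eqP => _ //; case: (e j) => //=; by rewrite opprK.
Qed.

Lemma sum_sg i : \sum_e sg e i = 0.
Proof.
have H := sum_flip i (fun e => sg e i).
have H' : \sum_e sg (flip i e) i = \sum_e - sg e i.
  by apply: eq_bigr => e _; rewrite sg_flip eqxx.
move: H; rewrite H' sumrN => H; lra.
Qed.

Lemma KK_gt0 : 0 < KK.
Proof.
rewrite /KK (bigD1 [ffun=> true]) //=.
have : 0 <= \sum_(e : E | e != [ffun=> true]) (1 : R) by apply: sumr_ge0 => *; exact: ler01.
lra.
Qed.

Lemma sum_sg2 i j : \sum_e sg e i * sg e j = if i == j then KK else 0.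
Proof.
case: eqP => [<-|/eqP ij].
  by apply: eq_bigr => e _; rewrite /sg; case: (e i); rewrite ?mulr1 ?mulrNN ?mulr1.
have H := sum_flip i (fun e => sg e i * sg e j).
have H' : \sum_e sg (flip i e) i * sg (flip i e) j = \sum_e - (sg e i * sg e j).
  by apply: eq_bigr => e _; rewrite !sg_flip eqxx eq_sym (negbTE ij) mulNr.
move: H; rewrite H' sumrN => H; lra.
Qed.

Lemma bessel (g : E -> R) :
  \sum_i (\sum_e g e * sg e i) ^+ 2 <= KK * \sum_e g e ^+ 2.
Proof.
set d := fun i => \sum_e g e * sg e i.
set D := \sum_i d i ^+ 2.
set A := \sum_e g e ^+ 2.
set L := fun e => \sum_i d i * sg e i.
have h1 : \sum_e g e * L e = D.
  transitivity (\sum_e \sum_i d i * (g e * sg e i)).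
    by apply: eq_bigr => e _; rewrite mulr_sumr; apply: eq_bigr => i _; ring.
  rewrite exchange_big; apply: eq_bigr => i _; rewrite -mulr_sumr expr2 //.
have h2 : \sum_e L e ^+ 2 = KK * D.
  transitivity (\sum_e \sum_i \sum_j (d i * d j) * (sg e i * sg e j)).
    apply: eq_bigr => e _; rewrite expr2 /L mulr_suml; apply: eq_bigr => i _.
    by rewrite mulr_sumr; apply: eq_bigr => j _; ring.
  rewrite exchange_big /D mulr_sumr; apply: eq_bigr => i _.
  rewrite exchange_big.
  under eq_bigr do rewrite -mulr_sumr sum_sg2.
  rewrite (bigD1 i) //= eqxx big1 ?addr0; first ring.
  by move=> j /negbTE; rewrite eq_sym => ->; rewrite mulr0.
have h0 : 0 <= \sum_e (KK * g e - L e) ^+ 2 by apply: sumr_ge0 => e _; exact: sqr_ge0.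
have h3 : \sum_e (KK * g e - L e) ^+ 2 = KK ^+ 2 * A - 2 * KK * D + KK * D.
  transitivity (\sum_e (KK ^+ 2 * g e ^+ 2 + (- (2 * KK)) * (g e * L e) + L e ^+ 2)).
    by apply: eq_bigr => e _; ring.
  rewrite !big_split /= -!mulr_sumr h1 h2 /A; ring.
rewrite h3 in h0.
have hK := KK_gt0.
nra.
Qed.

End Vertex.
Arguments sg {R N} e i.
Arguments KK {R N}.
Arguments sum_flip {R N}.
Arguments bessel {R N}.
Arguments flip {N}.
Arguments sg_flip {R N}.

Section Lower.
Variables (R : realType) (N : nat) (a b : 'I_N -> R) (p : {ffun {set 'I_N} -> R}).
Hypothesis hab : forall i, a i <= b i.
Hypothesis hp0 : forall S, 0 <= p S.
Hypothesis hp1 : \sum_(S : {set 'I_N}) p S = 1.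
Hypothesis hpi : forall i, 0 < incl_prob p i.
Local Notation E := {ffun 'I_N -> bool}.
Local Notation K := (@KK R N).

Lemma cs_bound (i : 'I_N) (c : {set 'I_N} -> R) (Rr : R) :
  (forall S : {set 'I_N}, i \notin S -> c S = 0) -> expect p c = Rr ->
  Rr ^+ 2 * ((incl_prob p i)^-1 - 1) <= expect p (fun S => (c S - Rr) ^+ 2).
Proof.
move=> c0 hc.
set q := Rr / incl_prob p i.
have pi0 : incl_prob p i != 0 by have := hpi i; rewrite lt0r => /andP[].
have h0 : 0 <= expect p (fun S => if i \in S then (c S - q) ^+ 2 else 0).
  apply: sumr_ge0 => S _; apply: mulr_ge0 => //.
  by case: (i \in S); rewrite ?sqr_ge0.
have e1 : expect p (fun S => if i \in S then (c S - q) ^+ 2 else 0) =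
   expect p (fun S => c S ^+ 2) - 2 * q * Rr + q ^+ 2 * incl_prob p i.
  transitivity (expect p (fun S => c S ^+ 2 + ((- (2 * q)) * c S + (if i \in S then q ^+ 2 else 0)))).
    apply: expect_ext => S; case iS: (i \in S) => /=; first ring.
    by rewrite c0 ?iS //; ring.
  by rewrite !expectD // expectZ // expect_if -/(incl_prob p i) hc; ring.
have e2 : expect p (fun S => (c S - Rr) ^+ 2) = expect p (fun S => c S ^+ 2) - Rr ^+ 2.
  transitivity (expect p (fun S => c S ^+ 2 + ((- (2 * Rr)) * c S + Rr ^+ 2))).
    by apply: expect_ext => S; ring.
  by rewrite !expectD // expectZ // expect_cst // hc; ring.
rewrite e1 in h0; rewrite e2 -subr_ge0.
have -> : expect p (fun S => c S ^+ 2) - Rr ^+ 2 - Rr ^+ 2 * ((incl_prob p i)^-1 - 1) =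
   expect p (fun S => c S ^+ 2) - 2 * q * Rr + q ^+ 2 * incl_prob p i.
  by rewrite /q; field.
exact: h0.
Qed.


Definition vtx (e : E) : 'I_N -> R := fun i => if e i then b i else a i.

Lemma vtx_Theta e : Theta a b (vtx e).
Proof. by move=> i; rewrite /vtx; case: (e i); rewrite lexx hab. Qed.

Lemma vtx_eq e i : vtx e i = (a i + b i) / 2 + (b i - a i) / 2 * sg e i.
Proof. by rewrite /vtx /sg; case: (e i); field. Qed.

Lemma sum_total i : \sum_e Defs.total (vtx e) * sg e i = K * ((b i - a i) / 2).
Proof.
transitivity (\sum_e \sum_j ((a j + b j) / 2 * sg e i + (b j - a j) / 2 * (sg e j * sg e i))).
  apply: eq_bigr => e _; rewrite /Defs.total mulr_suml; apply: eq_bigr => j _.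
  by rewrite vtx_eq; ring.
rewrite exchange_big /=.
transitivity (\sum_j ((b j - a j) / 2 * (if j == i then K else 0))).
  by apply: eq_bigr => j _; rewrite big_split /= -!mulr_sumr sum_sg sum_sg2; ring.
rewrite (bigD1 i) //= eqxx big1 ?addr0; first ring.
by move=> j /negbTE ->; rewrite mulr0.
Qed.

Lemma lower (d : estimator R N) :
  (forall (S : {set 'I_N}) y y', Theta a b y -> Theta a b y' ->
       (forall i, i \in S -> y i = y' i) -> d S y = d S y') ->
  unbiased a b p d ->
  exists y, Theta a b y /\
    \sum_i ((b i - a i) / 2) ^+ 2 * ((incl_prob p i)^-1 - 1) <= risk p d y.
Proof.
move=> dep unb.
set V := \sum_i ((b i - a i) / 2) ^+ 2 * ((incl_prob p i)^-1 - 1).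
set C := fun S i => \sum_e d S (vtx e) * sg e i.
have Cout : forall (S : {set 'I_N}) (i : 'I_N), i \notin S -> C S i = 0.
  move=> S i iS; rewrite /C.
  have H := sum_flip i (fun e => d S (vtx e) * sg e i).
  have H' : \sum_e d S (vtx (flip i e)) * sg (flip i e) i = \sum_e - (d S (vtx e) * sg e i).
    apply: eq_bigr => e _; rewrite sg_flip eqxx mulrN; congr (- (_ * _)).
    apply: dep; [exact: vtx_Theta | exact: vtx_Theta |].
    move=> k kS; rewrite /vtx ffunE; case: eqP => [ki|//].
    by move: iS; rewrite -ki kS.
  by move: H; rewrite H' sumrN => H; lra.
have Cunb : forall i, expect p (fun S => C S i) = K * ((b i - a i) / 2).
  move=> i; rewrite /expect /C.
  transitivity (\sum_e sg e i * \sum_S p S * d S (vtx e)).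
    transitivity (\sum_S \sum_e p S * (d S (vtx e) * sg e i)).
      by apply: eq_bigr => S _; rewrite mulr_sumr.
    rewrite exchange_big; apply: eq_bigr => e _; rewrite mulr_sumr.
    by apply: eq_bigr => S _; ring.
  rewrite -(sum_total i); apply: eq_bigr => e _.
  by have := unb _ (vtx_Theta e); rewrite /expect => ->; rewrite mulrC.
set g := fun S e => d S (vtx e) - Defs.total (vtx e).
have h1 : \sum_e risk p d (vtx e) * K = \sum_S p S * (K * \sum_e g S e ^+ 2).
  rewrite /risk /expect.
  transitivity (\sum_e \sum_S K * (p S * g S e ^+ 2)).
    by apply: eq_bigr => e _; rewrite mulr_suml; apply: eq_bigr => S _; rewrite /g; ring.
  rewrite exchange_big; apply: eq_bigr => S _; rewrite !mulr_sumr.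
  by apply: eq_bigr => e _; ring.
have h2 : \sum_S p S * \sum_i (C S i - K * ((b i - a i) / 2)) ^+ 2 <=
          \sum_S p S * (K * \sum_e g S e ^+ 2).
  apply: ler_sum => S _; apply: ler_wpM2l; first exact: hp0.
  have := bessel (g S).
  have -> : \sum_i (\sum_e g S e * sg e i) ^+ 2 =
            \sum_i (C S i - K * ((b i - a i) / 2)) ^+ 2.
    apply: eq_bigr => i _; congr (_ ^+ 2).
    rewrite /C -sum_total -sumrB; apply: eq_bigr => e _; rewrite /g; ring.
  by [].
have h3 : \sum_S p S * \sum_i (C S i - K * ((b i - a i) / 2)) ^+ 2 =
          \sum_i expect p (fun S => (C S i - K * ((b i - a i) / 2)) ^+ 2).
  by rewrite -expect_sum.
have h4 : K ^+ 2 * V <=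
          \sum_i expect p (fun S => (C S i - K * ((b i - a i) / 2)) ^+ 2).
  rewrite /V mulr_sumr; apply: ler_sum => i _.
  have := cs_bound i _ _ (Cout^~ i) (Cunb i).
  by rewrite exprMn -mulrA.
have hK : 0 < (K : R) := KK_gt0 R N.
have h5 : K * V <= \sum_e risk p d (vtx e).
  have : K ^+ 2 * V <= \sum_e risk p d (vtx e) * K by rewrite h1; apply: le_trans h4 _; rewrite -h3; exact: h2.
  rewrite -mulr_suml expr2 -mulrA mulrC ler_pM2r //.
case: (boolP [exists e : E, V <= risk p d (vtx e)]) => [/existsP [e He] | /existsPn H].
  by exists (vtx e); split => //; exact: vtx_Theta.
exfalso.
have H' : forall e : E, risk p d (vtx e) < V by move=> e; have := H e; rewrite -ltNge.
have : \sum_e risk p d (vtx e) < K * V.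
  rewrite /KK mulr_suml.
  rewrite [X in _ < X](bigD1 [ffun=> true]) //= [X in X < _](bigD1 [ffun=> true]) //=.
  rewrite mul1r; apply: ltr_leD; first exact: H'.
  by apply: ler_sum => e _; exact: ltW.
by move=> HH; have := lt_le_trans HH h5; rewrite ltxx.
Qed.

End Lower.

Theorem proposition3 (R : realType) (N : nat) (a b : 'I_N -> R)
  (p : {ffun {set 'I_N} -> R}) :
  (0 < N)%N ->
  (forall i, a i <= b i) ->
  (forall i, 0 < (b i - a i) / 2) ->
  is_design p ->
  (forall i, 0 < incl_prob p i) ->
  (forall i j, i != j -> incl_prob2 p i j = incl_prob p i * incl_prob p j) ->
  minimax_risk a b p =
    (\sum_i ((b i - a i) / 2) ^+ 2 * ((1 - incl_prob p i) / incl_prob p i))%:E /\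
  is_estimator a b (That a b p) /\ unbiased a b p (That a b p) /\
  max_risk a b p (That a b p) =
    (\sum_i ((b i - a i) / 2) ^+ 2 * ((1 - incl_prob p i) / incl_prob p i))%:E.
Proof.
move=> N0 hab hr [hp0 hp1] hpi hind.
set V := \sum_i ((b i - a i) / 2) ^+ 2 * ((1 - incl_prob p i) / incl_prob p i).
have pi0 : forall i, incl_prob p i != 0.
  by move=> i; have := hpi i; rewrite lt0r => /andP[].
have hV : V = \sum_i ((b i - a i) / 2) ^+ 2 * ((incl_prob p i)^-1 - 1).
  apply: eq_bigr => i _; congr (_ * _); have := pi0 i => ?; by field.
have pile1 : forall i, incl_prob p i <= 1.
  move=> i; rewrite /incl_prob -hp1 [in X in X <= _]big_mkcond /=.
  by apply: ler_sum => S _; case: ifP => // _; exact: hp0.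
have est : is_estimator a b (That a b p).
  move=> s; split.
    move=> y y' _ _ H; rewrite /That; congr (_ + _).
    by apply: eq_bigr => i iS; rewrite H.
  move=> B mB.
  exact: (@lin_meas R N a b s (\sum_i (a i + b i) / 2) (incl_prob p) (fun i => (a i + b i) / 2) B mB).
have unb : unbiased a b p (That a b p).
  move=> y _.
  transitivity (expect p (fun S => (That a b p S y - Defs.total y) + Defs.total y)).
    by apply: expect_ext => S; rewrite subrK.
  rewrite expectD expect_cst //.
  have -> : expect p (fun S => That a b p S y - Defs.total y) =
      expect p (fun S => \sum_i (y i - (a i + b i) / 2) * Xf p i S).
    by apply: expect_ext => S; exact: That_dev.
  rewrite expect_sum big1 ?add0r // => i _.
  by rewrite expectZ EX // mulr0.
have maxT : max_risk a b p (That a b p) = V%:E.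
  rewrite /max_risk; apply/eqP; rewrite eq_le; apply/andP; split.
    apply: ge_ereal_sup => x [y Ty <-]; rewrite lee_fin risk_That // hV.
    apply: ler_sum => i _; apply: ler_wpM2r.
      by rewrite subr_ge0 invf_ge1.
    have := Ty i => /andP[h1 h2].
    rewrite -subr_ge0.
    have -> : ((b i - a i) / 2) ^+ 2 - (y i - (a i + b i) / 2) ^+ 2 = (b i - y i) * (y i - a i).
      by field.
    by apply: mulr_ge0; rewrite subr_ge0.
  apply: ereal_sup_ubound; exists b.
    by move=> i; rewrite lexx hab.
  rewrite risk_That // hV; congr EFin; apply: eq_bigr => i _; congr (_ ^+ 2 * _); by field.
suff mm : minimax_risk a b p = V%:E.
  by split; [exact: mm | split; [exact: est | split; [exact: unb | exact: maxT]]].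
rewrite /minimax_risk; apply/eqP; rewrite eq_le; apply/andP; split.
  rewrite -maxT; apply: ereal_inf_lbound; exists (That a b p) => //.
apply/ereal_infP => x [d [estd unbd] <-].
have [y [Ty Hy]] := @lower R N a b p hab hp0 hp1 hpi d
   (fun S y y' Ty Ty' H => (estd S).1 y y' Ty Ty' H) unbd.
have h1 : (V%:E <= (risk p d y)%:E)%E by rewrite lee_fin hV.
apply: le_trans h1 _.
by apply: ereal_sup_ubound; exists y.
Qed.
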